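(* Assume hypothesis (A). For every $i\in\{1,\dots,d\}$ and $s\in(-1,+\infty)$, the system of equations $$e^{\alpha^i}=1+s,\qquad e^{\alpha^j}=\sum_{k=1}^dp_{jk}e^{\alpha^k}+p_{j0},\quad j\in\{1,\dots,d\}\setminus\{i\},$$ in $\alpha=(\alpha^1,\dots,\alpha^d)\in\mathbb{R}^d$ has a unique solution $\alpha(s)$, given by $\alpha^i(s)=\log(1+s)$ and $\alpha^j(s)=\log(1+Q_{ji}s)$ for $j\ne i$. Moreover, for every $\Lambda\subset\{1,\dots,d\}$, $$R_\Lambda(\alpha(s))=\frac{s}{G_{ii}}\Bigl(\nu_i-\frac{\mu_i}{1+s}\mathbf{1}_\Lambda(i)\Bigr).$$
   Context: Jackson network with $d$ queues: arrival rates $\lambda_i\ge0$, service rates $\mu_i>0$, routing matrix $P=(p_{ij})_{i,j=1}^d$ nonnegative with $p_{ii}=0$, $\sum_jp_{ij}\le1$, $p_{i0}=1-\sum_jp_{ij}$. Hypothesis (A): the jump-rate kernel on $\mathbb{Z}^d$ (jumps $+\epsilon^i$ at rate $\lambda_i$, $-\epsilon^i$ at rate $\mu_ip_{i0}$, $\epsilon^j-\epsilon^i$ at rate $\mu_ip_{ij}$) is irreducible (equivalently spectral radius of $P$ $<1$ and for every $i$ some $\lambda_jp^{(n)}_{ji}>0$); then the traffic equations $\nu_j=\lambda_j+\sum_i\nu_ip_{ij}$ have a unique solution. $G=(I-P)^{-1}$. $Q_{ij}$: probability that the chain on $\{0,\dots,d\}$ with transitions $p_{ij}$ ($0$ absorbing)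 started at $i$ ever visits $j$ (time $0$ included). For $\Lambda\subset\{1,\dots,d\}$ and $\alpha\in\mathbb{R}^d$, $$R_\Lambda(\alpha)=\sum_{j=1}^d\lambda_j(e^{\alpha^j}-1)+\sum_{j\in\Lambda}\mu_j\Bigl(\sum_{k=1}^dp_{jk}e^{\alpha^k-\alpha^j}+p_{j0}e^{-\alpha^j}-1\Bigr).$$ *)

(* Defs.v *)
From HB Require Import structures.
From mathcomp Require Import all_boot all_order all_algebra.
From mathcomp Require Import all_classical all_reals all_analysis.
Set Implicit Arguments. Unset Strict Implicit. Unset Printing Implicit Defensive.
Import Order.TTheory GRing.Theory Num.Theory numFieldNormedType.Exports.
Local Open Scope ring_scope.

Section Jackson.
Variables (R : realType) (d : nat).
Variables (lam mu : 'I_d -> R) (P : 'M[R]_d).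

Definition p0 (i : 'I_d) : R := 1 - \sum_(j < d) P i j.

Definition jackson_params : Prop :=
  (forall i, 0 <= lam i) /\ (forall i, 0 < mu i) /\
  (forall i j, 0 <= P i j) /\ (forall i, P i i = 0) /\
  (forall i, \sum_(j < d) P i j <= 1).

Definition unitv (i : 'I_d) : 'I_d -> int := fun k => (k == i)%:R.

Definition pos_jump (v : 'I_d -> int) : Prop :=
  (exists i, v =1 unitv i /\ 0 < lam i) \/
  (exists i, v =1 (fun k => - unitv i k) /\ 0 < mu i * p0 i) \/
  (exists i j, v =1 (fun k => unitv j k - unitv i k) /\ 0 < mu i * P i j).

(* Hypothesis (A): the jump-rate kernel on Z^d is irreducible: every y is
   reachable from every x by a finite path of positive-rate jumps. *)
Definition hypA : Prop :=
  forall x y : 'I_d -> int, exists (n : nat) (v : nat -> 'I_d -> int),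
    (forall m, (m < n)%N -> pos_jump (v m)) /\
    (forall k, y k = x k + \sum_(m < n) v m k).

(* hitn j n i = probability that the chain on {0,...,d} with transitions p_ij
   (0 absorbing) started at i visits j at some time in {0,...,n}. *)
Fixpoint hitn (j : 'I_d) (n : nat) (i : 'I_d) : R :=
  match n with
  | O => (i == j)%:R
  | n'.+1 => if i == j then 1 else \sum_(k < d) P i k * hitn j n' k
  end.

Definition Q (i j : 'I_d) : R := limn (fun n => hitn j n i).

Definition G : 'M[R]_d := invmx (1%:M - P).

Definition traffic (nu : 'I_d -> R) : Prop :=
  forall j, nu j = lam j + \sum_(i < d) nu i * P i j.

Definition RL (L : {set 'I_d}) (alpha : 'I_d -> R) : R :=
  \sum_(j < d) lam j * (expR (alpha j) - 1) +
  \sum_(j in L) mu j * (\sum_(k < d) P j k * expR (alpha k - alpha j)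
                        + p0 j * expR (- alpha j) - 1).

Definition alpha_system (i : 'I_d) (s : R) (alpha : 'I_d -> R) : Prop :=
  expR (alpha i) = 1 + s /\
  forall j, j != i ->
    expR (alpha j) = \sum_(k < d) P j k * expR (alpha k) + p0 j.

Definition alpha_sol (i : 'I_d) (s : R) : 'I_d -> R :=
  fun j => if j == i then ln (1 + s) else ln (1 + Q j i * s).

End Jackson.

(* Main.v *)
Require Import Defs.
From HB Require Import structures.
From mathcomp Require Import all_boot all_order all_algebra.
From mathcomp Require Import all_classical all_reals all_analysis.
From mathcomp Require Import ring lra.
Import Order.TTheory GRing.Theory Num.Theory numFieldNormedType.Exports.
Local Open Scope classical_set_scope.
Local Open Scope ring_scope.

Section Aux.
Variables (R : realType) (d : nat) (lam mu : 'I_d -> R) (P : 'M[R]_d).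
Hypothesis HJ : jackson_params lam mu P.
Hypothesis HA : hypA lam mu P.

Lemma maxprinc (y : 'I_d -> R) :
  (forall j, 0 < y j -> y j <= \sum_(k < d) P j k * y k) -> forall j, y j <= 0.
Proof.
move=> Hy j; rewrite leNgt; apply/negP => yj.
case: HJ => _ [mupos [Pge0 [_ Psum]]].
pose m := [arg max_(k > j) y k]%O.
have Hm : forall k, y k <= y m.
  by rewrite /m; case: arg_maxP => //= a _ Ha k; exact: Ha.
pose M := y m.
have Mpos : 0 < M by apply: lt_le_trans yj (Hm j).
have key : forall k, y k = M -> p0 P k = 0 /\ forall l, 0 < P k l -> y l = M.
  move=> k ykM.
  have h1 : M <= \sum_l P k l * y l by rewrite -ykM; apply: Hy; rewrite ykM.
  have h2 : \sum_l P k l * y l <= \sum_l P k l * M.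
    by apply: ler_sum => l _; apply: ler_wpM2l.
  have p0ge : 0 <= p0 P k by rewrite /p0 subr_ge0.
  have e : \sum_l P k l * M = M - p0 P k * M.
    rewrite -mulr_suml /p0; ring.
  have p0M : p0 P k * M <= 0 by lra.
  split.
    apply/eqP; rewrite eq_le p0ge andbT.
    by rewrite -(pmulr_lle0 _ Mpos).
  have hz : \sum_l P k l * (M - y l) = 0.
    apply/eqP; rewrite eq_le; apply/andP; split.
      under eq_bigr do rewrite mulrBr.
      have : 0 <= p0 P k * M by apply: mulr_ge0 => //; exact: ltW.
      rewrite sumrB; lra.
    by apply: sumr_ge0 => l _; apply: mulr_ge0 => //; rewrite subr_ge0.
  move=> l Pkl.
  have hnn : forall l', true -> 0 <= P k l' * (M - y l').
    by move=> l' _; apply: mulr_ge0 => //; rewrite subr_ge0.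
  move/eqP: (psumr_eq0P hnn hz isT (i:=l)).
  by rewrite mulf_eq0 (gt_eqF Pkl) /= subr_eq0 => /eqP ->.
have [n [v [Hv Hsum]]] := HA (unitv m) (fun _ => 0).
pose S := fun k => y k == M.
have fu : forall c, \sum_(k | S k) unitv c k = (S c)%:R.
  move=> c; rewrite /unitv; case Sc: (S c).
    rewrite (bigD1 c) //= eqxx big1 ?addr0 // => k /andP[_ kc].
    by rewrite (negbTE kc).
  rewrite big1 // => k Sk.
  have kc : k != c by apply: contraTneq Sk => ->; rewrite Sc.
  by rewrite (negbTE kc).
have fv : forall t, (t < n)%N -> 0 <= \sum_(k | S k) v t k.
  move=> t Ht.
  case: (Hv t Ht) => [[a [va la]] | [[a [va la]] | [a [b [va la]]]]].
  - by rewrite (eq_bigr _ (fun k _ => va k)) fu ler0n.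
  - rewrite (eq_bigr _ (fun k _ => va k)) sumrN fu.
    case Sa: (S a); last by rewrite oppr0.
    have [hp _] := key a (eqP Sa).
    by move: la; rewrite hp mulr0 ltxx.
  - rewrite (eq_bigr _ (fun k _ => va k)) sumrB !fu.
    case Sa: (S a); last by rewrite subr0 ler0n.
    have [_ hl] := key a (eqP Sa).
    have Pab : 0 < P a b by move: la; rewrite pmulr_rgt0.
    by rewrite /S (hl b Pab) eqxx subrr.
have eq : (0 : int) = \sum_(k | S k) unitv m k + \sum_(t < n) \sum_(k | S k) v t k.
  by rewrite (exchange_big) /= -big_split /= big1 // => k _.
move: eq; rewrite fu /S eqxx => eq.
have H0 : 0 <= \sum_(t < n) \sum_(k | y k == M) v t k.
  by apply: sumr_ge0 => t _; apply: fv.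
by move/eqP: eq; rewrite eq_sym paddr_eq0 // oner_eq0.
Qed.

Lemma harm_le0 i (z : 'I_d -> R) : z i = 0 ->
  (forall j, j != i -> z j = \sum_(k < d) P j k * z k) -> forall j, z j <= 0.
Proof.
move=> zi Hz; apply: maxprinc => j zj.
have ji : j != i by apply: contraTneq zj => ->; rewrite zi ltxx.
by rewrite -Hz.
Qed.

Lemma harm0 i (y : 'I_d -> R) : y i = 0 ->
  (forall j, j != i -> y j = \sum_(k < d) P j k * y k) -> forall j, y j = 0.
Proof.
move=> yi Hy j; apply/eqP; rewrite eq_le (harm_le0 _ _ yi Hy) /=.
have := @harm_le0 i (fun k => - y k) _ _ j.
rewrite oppr_le0; apply; first by rewrite yi oppr0.
move=> k ki; rewrite Hy // -sumrN; apply: eq_bigr => l _; by rewrite mulrN.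
Qed.

Lemma harm_all (y : 'I_d -> R) :
  (forall j, y j = \sum_(k < d) P j k * y k) -> forall j, y j = 0.
Proof.
move=> Hy j; apply/eqP; rewrite eq_le.
rewrite (@maxprinc y) /=; last by move=> k _; rewrite -Hy.
have := @maxprinc (fun k => - y k) _ j.
rewrite oppr_le0; apply => k _.
rewrite Hy -sumrN le_eqVlt; apply/orP; left; apply/eqP; apply: eq_bigr => l _.
by rewrite mulrN.
Qed.

Lemma unitA : (1%:M - P) \in unitmx.
Proof.
rewrite -unitmx_tr -row_free_unit -kermx_eq0; apply/eqP/matrixP => r c.
pose y := fun k => kermx (1%:M - P)^T r k.
have hz := mulmx_ker (1%:M - P)^T.
have Hy : forall j, y j = \sum_(k < d) P j k * y k.
  move=> j; have := congr1 (fun M : matrix R d d => M r j) hz.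
  rewrite !mxE => e.
  have e2 : \sum_k kermx (1%:M - P)^T r k * ((k == j)%:R - P j k) = 0.
    by rewrite -[RHS]e; apply: eq_bigr => k _; rewrite !mxE eq_sym.
  move: e2; under eq_bigr do rewrite mulrBr.
  rewrite sumrB (bigD1 j) //= eqxx mulr1 big1 ?addr0; last first.
    by move=> k /negbTE ->; rewrite mulr0.
  move/eqP; rewrite subr_eq0 /y => /eqP ->.
  by apply: eq_bigr => k _; rewrite mulrC.
rewrite [RHS]mxE; exact: (harm_all _ Hy c).
Qed.

Lemma GE j i : G P j i = (j == i)%:R + \sum_(k < d) P j k * G P k i.
Proof.
have := congr1 (fun M : matrix R d d => M j i) (mulmxV unitA).
rewrite mulmxBl mul1mx !mxE /G => e.
by rewrite -e subrK.
Qed.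

Lemma hit_bounds i n k : 0 <= hitn P i n k <= 1.
Proof.
case: HJ => _ [_ [Pge0 [_ Psum]]].
elim: n k => [|n IH] k /=; first by case: (k == i); rewrite /= ?lexx ?ler01.
case: eqP => _; first by rewrite ler01 lexx.
apply/andP; split.
  by apply: sumr_ge0 => l _; apply: mulr_ge0 => //; case/andP: (IH l).
apply: le_trans (Psum k); apply: ler_sum => l _.
by rewrite ler_piMr //; case/andP: (IH l).
Qed.

Lemma hit_mono i n k : hitn P i n k <= hitn P i n.+1 k.
Proof.
case: HJ => _ [_ [Pge0 _]].
elim: n k => [|n IH] k.
  rewrite /=; case: eqP => _ //.
  by apply: sumr_ge0 => l _; apply: mulr_ge0 => //; case/andP: (hit_bounds i 0 l).
rewrite [X in X <= _]/= [X in _ <= X]/=; case: eqP => _ //.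
by apply: ler_sum => l _; apply: ler_wpM2l.
Qed.

Lemma hit_ii i n : hitn P i n i = 1.
Proof. by case: n => [|n] /=; rewrite eqxx. Qed.

Lemma hit_cvg i k : hitn P i n k @[n --> \oo] --> Q P k i.
Proof.
apply: nondecreasing_is_cvgn.
  by apply/nondecreasing_seqP => n; apply: hit_mono.
by exists 1 => x [n _ <-]; case/andP: (hit_bounds i n k).
Qed.

Lemma Q_bounds i k : 0 <= Q P k i <= 1.
Proof.
apply/andP; split.
  apply: limr_ge; first exact: hit_cvg.
  by apply: nearW => n; case/andP: (hit_bounds i n k).
apply: limr_le; first exact: hit_cvg.
by apply: nearW => n; case/andP: (hit_bounds i n k).
Qed.

Lemma Q_ii i : Q P i i = 1.
Proof.
rewrite /Q (_ : (fun n => hitn P i n i) = fun=> 1); first exact: lim_cst.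
by apply/funext => n; rewrite hit_ii.
Qed.

Lemma cvg_bigsum (I : Type) (r : seq I) (F : I -> nat -> R) (l : I -> R) :
  (forall k, F k n @[n --> \oo] --> l k) ->
  (\sum_(k <- r) F k n) @[n --> \oo] --> \sum_(k <- r) l k.
Proof.
move=> HF; elim: r => [|a r IH].
  rewrite big_nil (_ : (fun n => \sum_(k <- [::]) F k n) = fun=> 0).
    exact: cvg_cst.
  by apply/funext => n; rewrite big_nil.
rewrite big_cons (_ : (fun n => \sum_(k <- a :: r) F k n) =
   (fun n => F a n) + (fun n => \sum_(k <- r) F k n)).
  exact: cvgD.
by apply/funext => n; rewrite big_cons.
Qed.

Lemma Q_eq i j : j != i -> Q P j i = \sum_(k < d) P j k * Q P k i.
Proof.
move=> ji; apply: cvg_lim => //.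
rewrite -cvg_shiftS /=.
rewrite (_ : (fun n => hitn P i n.+1 j) = fun n => \sum_(k < d) P j k * hitn P i n k).
  apply: cvg_bigsum => k; apply: cvgMr; exact: hit_cvg.
by apply/funext => n /=; rewrite (negbTE ji).
Qed.

End Aux.

Theorem lemma4p1 (R : realType) (d : nat) (lam mu : 'I_d -> R) (P : 'M[R]_d)
  (nu : 'I_d -> R) :
  jackson_params lam mu P -> hypA lam mu P -> traffic lam P nu ->
  forall (i : 'I_d) (s : R), -1 < s ->
    (forall alpha : 'I_d -> R,
        alpha_system P i s alpha <-> alpha =1 alpha_sol P i s) /\
    (forall L : {set 'I_d},
        RL lam mu P L (alpha_sol P i s) =
        s / G P i i * (nu i - mu i / (1 + s) * (i \in L)%:R)).
Proof.
move=> HJ HA Htr i s s1.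
have Qb := @Q_bounds R d lam mu P HJ i.
have Qii := @Q_ii R d P i.
have Qe := @Q_eq R d lam mu P HJ i.
have h0 := @harm0 R d lam mu P HJ HA i.
have GEq := @GE R d lam mu P HJ HA.
have s1p : 0 < 1 + s by lra.
have s1n : 1 + s != 0 by rewrite gt_eqF.
have pos : forall k, 0 < 1 + Q P k i * s.
  move=> k; case/andP: (Qb k) => q0 q1.
  case: (lerP 0 s) => hs; first by nra.
  have : s <= Q P k i * s by nra.
  lra.
have E : forall k, expR (alpha_sol P i s k) = 1 + Q P k i * s.
  move=> k; rewrite /alpha_sol; case: eqP => [->|_].
    by rewrite Qii mul1r lnK // posrE.
  by rewrite lnK // posrE.
have sumP : forall j, \sum_k P j k * (1 + Q P k i * s) + p0 P j
                      = 1 + (\sum_k P j k * Q P k i) * s.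
  move=> j; rewrite /p0; under eq_bigr do rewrite mulrDr mulr1 mulrA.
  rewrite big_split /= -mulr_suml; ring.
split.
- move=> alpha; split.
  + case=> ea Hj.
    have y0 := h0 (fun k => expR (alpha k) - expR (alpha_sol P i s k)).
    move=> k; apply: expR_inj; apply/eqP; rewrite -subr_eq0; apply/eqP.
    apply: y0 => [|j ji] /=.
      by rewrite ea E Qii mul1r subrr.
    rewrite Hj // E (Qe j ji).
    under [RHS]eq_bigr do rewrite E mulrBr.
    rewrite sumrB -(sumP j); ring.
  + move=> Ha; split.
      by rewrite (Ha i) E Qii mul1r.
    move=> j ji; rewrite (Ha j) E.
    under eq_bigr => k _ do rewrite (Ha k) E.
    by rewrite (Qe j ji) sumP.
- move=> L.
  pose c := \sum_(k < d) P i k * Q P k i.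
  have GQ : forall k, G P k i = Q P k i * G P i i.
    move=> k; apply/eqP; rewrite -subr_eq0; apply/eqP.
    apply: (h0 (fun k => G P k i - Q P k i * G P i i)) => [|j ji] /=.
      by rewrite Qii mul1r subrr.
    rewrite GEq (negbTE ji) add0r (Qe j ji) mulr_suml -sumrB.
    by apply: eq_bigr => l _; rewrite mulrBr mulrA.
  have Gc : G P i i * (1 - c) = 1.
    have := GEq i i; rewrite eqxx.
    under eq_bigr do rewrite GQ mulrA.
    rewrite -mulr_suml -/c => e.
    rewrite mulrBr mulr1 {1}e /=; ring.
  have Gnz : G P i i != 0.
    by apply/eqP => g0; move: Gc; rewrite g0 mul0r => /eqP; rewrite eq_sym oner_eq0.
  have nuE : nu i = G P i i * \sum_j lam j * Q P j i.
    have -> : G P i i * \sum_j lam j * Q P j i = \sum_j lam j * G P j i.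
      by rewrite mulr_sumr; apply: eq_bigr => j _; rewrite (GQ j); ring.
    have e1 : \sum_j lam j * G P j i = \sum_j nu j * G P j i
                 - \sum_j (\sum_k nu k * P k j) * G P j i.
      rewrite -sumrB; apply: eq_bigr => j _; rewrite -mulrBl {1}(Htr j) addrK //.
    have e2 : \sum_j (\sum_k nu k * P k j) * G P j i
                = \sum_k nu k * (G P k i - (k == i)%:R).
      under eq_bigr do rewrite mulr_suml.
      rewrite exchange_big /=; apply: eq_bigr => k _.
      have -> : G P k i - (k == i)%:R = \sum_l P k l * G P l i.
        by rewrite (GEq k i) addrC addKr.
      by rewrite mulr_sumr; apply: eq_bigr => j _; rewrite mulrA.
    rewrite e1 e2 -sumrB.
    under eq_bigr do rewrite mulrBr subKr.
    rewrite (bigD1 i) //= eqxx mulr1 big1 ?addr0 // => k /negbTE ->.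
    by rewrite mulr0.
  have term : forall j, mu j * (\sum_k P j k * expR (alpha_sol P i s k - alpha_sol P i s j)
      + p0 P j * expR (- alpha_sol P i s j) - 1)
      = if j == i then mu i * (s * (c - 1) / (1 + s)) else 0.
    move=> j; rewrite expRN.
    under eq_bigr do rewrite expRB !E.
    rewrite E.
    have -> : \sum_k P j k * ((1 + Q P k i * s) / (1 + Q P j i * s))
        = (\sum_k P j k * (1 + Q P k i * s)) / (1 + Q P j i * s).
      by rewrite mulr_suml; apply: eq_bigr => k _; rewrite mulrA.
    have xn : 1 + Q P j i * s != 0 by rewrite gt_eqF.
    have Tj : \sum_k P j k * (1 + Q P k i * s) = 1 + (\sum_k P j k * Q P k i) * s - p0 P j.
      by rewrite -sumP addrK.
    rewrite Tj.
    case: eqP => [ji|/eqP ji].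
      move: xn; rewrite ji Qii mul1r -/c => xn.
      by field.
    rewrite -(Qe j ji).
    by field.
  have S2 : \sum_(j in L) mu j * (\sum_k P j k * expR (alpha_sol P i s k - alpha_sol P i s j)
      + p0 P j * expR (- alpha_sol P i s j) - 1)
      = (i \in L)%:R * (mu i * (s * (c - 1) / (1 + s))).
    rewrite (eq_bigr _ (fun j _ => term j)).
    case iL: (i \in L).
      rewrite (bigD1 i) //= eqxx big1 ?addr0 ?mul1r // => j /andP[_ /negbTE ->] //.
    rewrite mul0r big1 // => j jL; case: eqP => // ji.
    by move: iL; rewrite -ji jL.
  have S1 : \sum_j lam j * (expR (alpha_sol P i s j) - 1) = s * \sum_j lam j * Q P j i.
    by rewrite mulr_sumr; apply: eq_bigr => j _; rewrite E; ring.
  rewrite /RL S1 S2.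
  have cE : c = 1 - (G P i i)^-1.
    apply: (mulfI Gnz); rewrite mulrBr mulfV // mulr1.
    rewrite -[X in _ = _ - X]Gc; ring.
  rewrite nuE cE.
  by field; rewrite s1n Gnz.
Qed.
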